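(* Let $G$ be the corresponding graph of an array $A$ with reach one, and let $F$ be a resulting DFS forest of $G$. Let $H'$ be obtained by merging the sub-trees of $F$; let $H_1,R_1$ be the graph and root list produced by the merge step on $H'$ with the list of roots of $F$, and $F_1$ the resulting DFS forest of $H_1$ with visiting list $R_1$; for $i>1$ let $H_i,R_i$ be produced by the merge step on $F_{i-1}$ with root list $R_{i-1}$, and $F_i$ the resulting DFS forest of $H_i$ with visiting list $R_i$. Then there exists a finite $i$ such that $F_i$ has exactly one component, i.e. is a tree (if $F$ itself has one component, $F$ is already such a tree).
   Context: An array is a finite sequence $A=(A[1],\dots,A[n])$ of pairwise distinct real numbers. A comparison graph on $A$ is a directed graph on $\{1,\dots,n\}$ all of whose arcs $(u,v)$ satisfy $A[u]<A[v]$. The corresponding graph of $A$ with reach one has an arc $(i,j)$ whenever $j\equiv i\pm1\pmod n$, $j\ne i$, and $A[i]<A[j]$. Components are connected components of the underlying undirected graph. DFS: adjacency lists sorted in increasing $A$-value; given a visiting list $(l_1,\dots,l_m)$ (for $F$, some ordering of all vertices), for each unvisited $l_t$ call Visit$(l_t)$, where Visit$(u)$ marks $u$ and, for each out-neighbour $w$ of $u$ in increasing $A$-value that is unvisited, sets parent$(w)=u$ and calls Visit$(w)$. The resulting DFS forest has arcs $(\mathrm{parent}(w),w)$; its roots are the vertices without parent. Merging the sub-trees of $F$: for each component of $F$ whose root has exactly two children $a_1,b_1$, set $p=a_1,q=b_1$ and, while both are defined: if $A[p]<A[q]$ add $(p,q)$ and replace $p$ by its smallest-valued child in $F$ (undefined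 if none); else add $(q,p)$ and replace $q$ likewise. Component merge of components $C,D$: set $p,q$ to the minimum-valued vertices of $C,D$; while both defined: if $A[p]<A[q]$ add $(p,q)$ and replace $p$ by the smallest-valued out-neighbour of $p$ within $C$ (ignoring arcs added in this merge; undefined if none); else add $(q,p)$ and replace $q$ analogously in $D$. Merge step with root list $(\rho_1,\dots,\rho_k)$ (the minimum-valued vertices of the components): component-merge the components of $\rho_{2j-1},\rho_{2j}$ for $j=1,\dots,\lfloor k/2\rfloor$ and return the list obtained by deleting the larger-valued root of each merged pair. *)

(* Defs.v *)
From mathcomp Require Import all_boot all_order all_algebra.
Set Implicit Arguments. Unset Strict Implicit. Unset Printing Implicit Defensive.
Import Order.TTheory GRing.Theory Num.Theory.
Local Open Scope ring_scope.

Section ArrayGraphs.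
Variables (R : realFieldType) (n : nat) (A : 'I_n -> R).

(* a directed graph on {0,..,n-1} (vertex i stands for position i+1) *)
Definition graph := rel 'I_n.

Definition reach_one_graph : graph := fun i j =>
  [&& i != j,
      (val j == (val i).+1 %% n)%N || (val i == (val j).+1 %% n)%N &
      A i < A j].

Definition sortA (s : seq 'I_n) : seq 'I_n := sort (fun x y => A x <= A y) s.

Definition out_nbrs (g : graph) (u : 'I_n) : seq 'I_n :=
  sortA [seq w <- enum 'I_n | g u w].

(* a forest is given by its parent function; arcs are (parent w, w) *)
Definition forest := 'I_n -> option 'I_n.

Definition forest_graph (F : forest) : graph := fun u w => F w == Some u.

Definition usym (g : graph) : graph := fun x y => g x y || g y x.

Definition one_component (F : forest) : Prop :=
  forall x y, connect (usym (forest_graph F)) x y.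

Record dfs_state := DS { visited : seq 'I_n; par : forest }.

Fixpoint visit (g : graph) (fuel : nat) (u : 'I_n) (st : dfs_state) : dfs_state :=
  match fuel with
  | 0 => st
  | f.+1 =>
    foldl (fun st w =>
             if w \in visited st then st
             else visit g f w (DS (visited st)
                                  (fun x => if x == w then Some u else par st x)))
          (DS (u :: visited st) (par st)) (out_nbrs g u)
  end.

(* resulting DFS forest of g with visiting list l
   (fuel n.+1 exceeds the maximal recursion depth n) *)
Definition dfs_forest (g : graph) (l : seq 'I_n) : forest :=
  par (foldl (fun st v => if v \in visited st then st else visit g n.+1 v st)
             (DS [::] (fun _ => None)) l).

Definition roots_in (l : seq 'I_n) (F : forest) : seq 'I_n :=
  [seq v <- l | F v == None].

Definition add_arc (g : graph) (p q : 'I_n) : graph :=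
  fun x y => g x y || ((x == p) && (y == q)).

(* the common "while both p and q are defined" loop; nextp/nextq give the
   replacement of p/q (None = undefined).  Fuel 2n+1 exceeds the number of
   iterations, since every replacement strictly increases the A-value. *)
Fixpoint zip_merge (nextp nextq : 'I_n -> option 'I_n) (fuel : nat)
    (p q : 'I_n) (g : graph) : graph :=
  match fuel with
  | 0 => g
  | f.+1 =>
    if A p < A q then
      let g' := add_arc g p q in
      match nextp p with Some p' => zip_merge nextp nextq f p' q g' | None => g' end
    else
      let g' := add_arc g q p in
      match nextq q with Some q' => zip_merge nextp nextq f p q' g' | None => g' end
  end.

Definition merge_fuel := ((n.*2).+1)%N.

Definition children (F : forest) (p : 'I_n) : seq 'I_n :=
  sortA [seq w <- enum 'I_n | F w == Some p].

Definition smallest_child (F : forest) (p : 'I_n) : option 'I_n :=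
  ohead (children F p).

Definition merge_subtrees (F : forest) : graph :=
  foldl (fun g r =>
           if F r is None then
             if children F r is [:: a1; b1] then
               zip_merge (smallest_child F) (smallest_child F) merge_fuel a1 b1 g
             else g
           else g)
        (forest_graph F) (enum 'I_n).

Definition comp_of (g : graph) (x : 'I_n) : seq 'I_n :=
  [seq y <- enum 'I_n | connect (usym g) x y].

Definition min_vertex (g : graph) (x : 'I_n) : 'I_n := head x (sortA (comp_of g x)).

(* smallest-valued out-neighbour of x within C (arcs of g0, i.e. ignoring
   arcs added during the merge) *)
Definition next_within (g0 : graph) (C : seq 'I_n) (x : 'I_n) : option 'I_n :=
  ohead [seq w <- out_nbrs g0 x | w \in C].

Definition component_merge (g0 : graph) (rho sigma : 'I_n) (g : graph) : graph :=
  zip_merge (next_within g0 (comp_of g0 rho)) (next_within g0 (comp_of g0 sigma))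
            merge_fuel (min_vertex g0 rho) (min_vertex g0 sigma) g.

Fixpoint merge_pairs (g0 : graph) (rs : seq 'I_n) (g : graph) : graph * seq 'I_n :=
  match rs with
  | r1 :: r2 :: rs' =>
    let res := merge_pairs g0 rs' (component_merge g0 r1 r2 g) in
    (res.1, (if A r1 < A r2 then r1 else r2) :: res.2)
  | _ => (g, rs)
  end.

Definition merge_step (g0 : graph) (rs : seq 'I_n) : graph * seq 'I_n :=
  merge_pairs g0 rs g0.

Definition round1 (F : forest) (rs : seq 'I_n) : forest * seq 'I_n :=
  let HR := merge_step (merge_subtrees F) rs in (dfs_forest HR.1 HR.2, HR.2).

Definition next_round (FR : forest * seq 'I_n) : forest * seq 'I_n :=
  let HR := merge_step (forest_graph FR.1) FR.2 in (dfs_forest HR.1 HR.2, HR.2).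

(* (F_i, R_i) for i >= 1 *)
Definition round (F : forest) (rs : seq 'I_n) (i : nat) : forest * seq 'I_n :=
  iter i.-1 next_round (round1 F rs).

End ArrayGraphs.

(* Main.v *)
Require Import Defs.
From mathcomp Require Import all_boot all_order all_algebra zify.
Set Implicit Arguments. Unset Strict Implicit. Unset Printing Implicit Defensive.
Import Order.TTheory GRing.Theory Num.Theory.
Local Open Scope ring_scope.



Section Gen.
Variables (R : realFieldType) (n : nat) (A : 'I_n -> R).
Hypothesis injA : injective A.

Definition winc (g : graph n) := forall x y, g x y -> A x <= A y.

Lemma connect_winc g : winc g -> forall x y, connect g x y -> A x <= A y.
Proof.
move=> hg x y /connectP [p]; elim: p x => [|z p IH] x /= ; first by move=> _ ->.
by case/andP=> hxz hp hy; apply: le_trans (hg _ _ hxz) (IH _ hp hy).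
Qed.

Lemma connect_pred (e : rel 'I_n) (P : pred 'I_n) :
  (forall x y, e x y -> P x -> P y) -> forall x y, connect e x y -> P x -> P y.
Proof.
move=> he x y /connectP [p]; elim: p x => [|z p IH] x /= ; first by move=> _ ->.
by case/andP=> hxz hp hy Px; apply: (IH _ hp hy); apply: he hxz Px.
Qed.

Lemma connect_fun (e : rel 'I_n) (T : Type) (f : 'I_n -> T) :
  (forall x y, e x y -> f x = f y) -> forall x y, connect e x y -> f x = f y.
Proof.
move=> he x y /connectP [p]; elim: p x => [|z p IH] x /= ; first by move=> _ ->.
by case/andP=> hxz hp hy; rewrite (he _ _ hxz); apply: IH.
Qed.

Lemma usym_sym (g : graph n) : symmetric (usym g).
Proof. by move=> x y; rewrite /usym orbC. Qed.

Lemma connect_usym (g : graph n) x y : connect g x y -> connect (usym g) x y.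
Proof. by apply: connect_sub => u v h; apply: connect1; rewrite /usym h. Qed.

Lemma usymC (g : graph n) x y : connect (usym g) x y = connect (usym g) y x.
Proof. exact: (sym_connect_sym (usym_sym g)). Qed.

Lemma connect_mono (g g' : graph n) : (forall x y, g x y -> g' x y) ->
  forall x y, connect g x y -> connect g' x y.
Proof. by move=> h; apply: connect_sub => u v /h; apply: connect1. Qed.

Lemma usym_mono (g g' : graph n) : (forall x y, g x y -> g' x y) ->
  forall x y, usym g x y -> usym g' x y.
Proof. by move=> h x y; rewrite /usym => /orP[/h->|/h->]; rewrite ?orbT. Qed.

Lemma zm_mono np nq f p q (g : graph n) x y :
  g x y -> zip_merge A np nq f p q g x y.
Proof.
elim: f p q g => [|f IH] p q g //= hg.
case: ifP => _.
  by case: (np p) => [p'|]; [apply: IH|]; rewrite /add_arc hg.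
by case: (nq q) => [q'|]; [apply: IH|]; rewrite /add_arc hg.
Qed.

Lemma zm_first np nq f p q (g : graph n) : (0 < f)%N ->
  if A p < A q then zip_merge A np nq f p q g p q
  else zip_merge A np nq f p q g q p.
Proof.
case: f => // f _ /=.
case: (A p < A q); [case: (np p)=> [p'|] | case: (nq q) => [q'|]];
  try apply: zm_mono; by rewrite /add_arc !eqxx orbT.
Qed.

Lemma zm_arcs np nq (Cp Cq : pred 'I_n) f p q (g : graph n) :
  (forall x y, Cp x -> np x = Some y -> Cp y) ->
  (forall x y, Cq x -> nq x = Some y -> Cq y) -> Cp p -> Cq q ->
  forall x y, zip_merge A np nq f p q g x y ->
   g x y \/ (A x <= A y /\ ((Cp x /\ Cq y) \/ (Cq x /\ Cp y))).
Proof.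
move=> hp hq; elim: f p q g => [|f IH] p q g /= Hp Hq x y; first by left.
case: ifP => hlt.
  have H1 : forall x y, add_arc g p q x y ->
     g x y \/ (A x <= A y /\ ((Cp x /\ Cq y) \/ (Cq x /\ Cp y))).
    move=> u v; rewrite /add_arc; case/orP=> [->|/andP[/eqP-> /eqP->]]; first by left.
    by right; split; [exact: ltW | left].
  case E: (np p) => [p'|]; last exact: H1.
  by case/(IH p' q _ (hp _ _ Hp E) Hq) => [/H1|]; last right.
have H1 : forall x y, add_arc g q p x y ->
   g x y \/ (A x <= A y /\ ((Cp x /\ Cq y) \/ (Cq x /\ Cp y))).
  move=> u v; rewrite /add_arc; case/orP=> [->|/andP[/eqP-> /eqP->]]; first by left.
  by right; split; [rewrite leNgt hlt | right].
case E: (nq q) => [q'|]; last exact: H1.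
by case/(IH p q' _ Hp (hq _ _ Hq E)) => [/H1|]; last right.
Qed.

Lemma children_mem F p c : c \in children A F p -> F c = Some p.
Proof. by rewrite /children /sortA mem_sort mem_filter => /andP[/eqP]. Qed.

Lemma smallest_child_some F p c : smallest_child A F p = Some c -> F c = Some p.
Proof.
rewrite /smallest_child; case E: (children A F p) => [|z s] //= [<-].
by apply: children_mem; rewrite E mem_head.
Qed.

Definition msInv F (g : graph n) :=
  (forall x y, forest_graph F x y -> g x y) /\
  (forall x y, g x y -> forest_graph F x y \/
     (A x <= A y /\ connect (usym (forest_graph F)) x y)).

Lemma ms_gen F s g : msInv F g -> msInv F (foldl (fun g r =>
           if F r is None then
             if children A F r is [:: a1; b1] then
               zip_merge A (smallest_child A F) (smallest_child A F) (merge_fuel n) a1 b1 g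
             else g
           else g) g s).
Proof.
elim: s g => [|r s IH] g [H1 H2]; first by split.
apply: IH; case E0: (F r) => [a|]; first by split.
case E: (children A F r) => [|a1 [|b1 [|? ?]]]; try by split.
set fg := forest_graph F.
set C := connect (usym fg) r.
have hC : forall x y, C x -> smallest_child A F x = Some y -> C y.
  move=> x y Cx /smallest_child_some Fy; apply: connect_trans Cx _.
  by apply: connect1; rewrite /usym /fg /forest_graph Fy eqxx.
have Ca : forall c, c \in children A F r -> C c.
  by move=> c /children_mem Fc; apply: connect1; rewrite /usym /fg /forest_graph Fc eqxx.
split=> x y; first by move/H1; apply: zm_mono.
have Ca1 : C a1 by apply: Ca; rewrite E mem_head.
have Cb1 : C b1 by apply: Ca; rewrite E !inE eqxx orbT.
case/(zm_arcs hC hC Ca1 Cb1); first by move/H2.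
move=> [le [[Cx Cy]|[Cx Cy]]]; right; split=> //;
  by apply: connect_trans Cy; rewrite usymC.
Qed.

Lemma ms_spec F : msInv F (merge_subtrees A F).
Proof. by apply: ms_gen; split=> x y h; [|left]. Qed.

Lemma min_vertex_root (g : graph n) r : winc g ->
  (forall v, connect (usym g) r v -> connect g r v) -> min_vertex A g r = r.
Proof.
move=> hw hr; rewrite /min_vertex /sortA.
have rs : r \in sort (fun x y => A x <= A y) (comp_of g r).
  by rewrite mem_sort mem_filter mem_enum connect0.
have Hs := sort_sorted (fun x y => le_total (A x) (A y)) (comp_of g r).
have hin : forall h, h \in sort (fun x y => A x <= A y) (comp_of g r) -> A r <= A h.
  move=> h; rewrite mem_sort mem_filter mem_enum andbT => /hr.
  exact: connect_winc.
move: rs Hs hin; case: (sort _ _) => [|h t] //= rin Hp hin.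
apply: injA; apply: le_anti; rewrite hin ?mem_head // andbT.
move: rin; rewrite inE => /orP[/eqP->//|rt].
have := order_path_min (fun y x z (h1 : A x <= A y) (h2 : A y <= A z) => le_trans h1 h2) Hp.
by move/allP/(_ _ rt).
Qed.


Definition winner (r1 r2 : 'I_n) := if A r1 < A r2 then r1 else r2.

Fixpoint grp (rs : seq 'I_n) : seq ('I_n * seq 'I_n) :=
  match rs with
  | r1 :: r2 :: t => (winner r1 r2, [:: r1; r2]) :: grp t
  | [:: r] => [:: (r, [:: r])]
  | [::] => [::]
  end.

Lemma grp_props rs :
  [/\ flatten (map snd (grp rs)) = rs,
      (forall wG, wG \in grp rs -> wG.1 \in wG.2),
      size (grp rs) = uphalf (size rs) &
      subseq (map fst (grp rs)) rs].
Proof.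
elim: (size rs).+1 {-2}rs (ltnSn (size rs)) => // k IH [|r1 [|r2 t]] //.
  move=> _; split=> //=; last by rewrite eqxx.
  by move=> wG; rewrite inE => /eqP->; rewrite mem_head.
move=> hs; have [h1 h2 h3 h4] := IH t (leq_trans (leqnSn _) (ltnSE hs)).
split.
- by rewrite /= h1.
- move=> wG; rewrite /= inE => /orP[/eqP->|/h2//] /=.
  by rewrite /winner; case: ifP; rewrite !inE eqxx ?orbT.
- by rewrite /= h3.
- rewrite [grp _]/= map_cons -[_ :: _]/([:: winner r1 r2] ++ _) -[r1 :: r2 :: t]/([:: r1; r2] ++ t).
  apply: cat_subseq => //; rewrite sub1seq /winner; by case: ifP; rewrite !inE eqxx ?orbT.
Qed.

Definition U (g0 : graph n) (G : seq 'I_n) (z : 'I_n) :=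
  has (fun r => connect (usym g0) r z) G.

Lemma comp_ofE (g0 : graph n) r z : (z \in comp_of g0 r) = connect (usym g0) r z.
Proof. by rewrite mem_filter mem_enum andbT. Qed.

Lemma next_within_in (g0 : graph n) C x y : next_within A g0 C x = Some y -> y \in C.
Proof.
rewrite /next_within; case E: [seq w <- out_nbrs A g0 x | w \in C] => [|z s] //= [<-].
have : z \in [seq w <- out_nbrs A g0 x | w \in C] by rewrite E mem_head.
by rewrite mem_filter => /andP[].
Qed.

Lemma mp_spec (g0 : graph n) rs (g : graph n) :
  (forall r, r \in rs -> min_vertex A g0 r = r) ->
  let res := merge_pairs A g0 rs g in
  [/\ res.2 = map fst (grp rs),
      (forall x y, g x y -> res.1 x y),
      (forall x y, res.1 x y -> g x y \/ (A x <= A y /\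
          exists wG, [/\ wG \in grp rs, U g0 wG.2 x & U g0 wG.2 y])) &
      (forall wG, wG \in grp rs -> forall r, r \in wG.2 -> connect res.1 wG.1 r)].
Proof.
elim: (size rs).+1 {-2}rs (ltnSn (size rs)) g => // k IH [|r1 [|r2 t]] hs g hmin /=.
- by split=> // x y; left.
- split=> //; first by move=> x y; left.
  by move=> wG; rewrite inE => /eqP-> r; rewrite inE => /eqP->; apply: connect0.
set g1 := component_merge A g0 r1 r2 g.
have hmin' : forall r, r \in t -> min_vertex A g0 r = r.
  by move=> r rt; apply: hmin; rewrite !inE rt !orbT.
have [e1 e2 e3 e4] := IH t (leq_trans (leqnSn _) (ltnSE hs)) g1 hmin'.
have m1 : min_vertex A g0 r1 = r1 by apply: hmin; rewrite mem_head.
have m2 : min_vertex A g0 r2 = r2 by apply: hmin; rewrite !inE eqxx orbT.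
have g1mono : forall x y, g x y -> g1 x y by move=> x y; apply: zm_mono.
split.
- by rewrite e1.
- by move=> x y /g1mono /e2.
- move=> x y /e3 [|[le [wG [wGin Ux Uy]]]]; last first.
    by right; split=> //; exists wG; rewrite inE wGin orbT.
  rewrite /g1 /component_merge m1 m2.
  case/(zm_arcs (Cp := fun z => z \in comp_of g0 r1) (Cq := fun z => z \in comp_of g0 r2)).
  + by move=> u v _; apply: next_within_in.
  + by move=> u v _; apply: next_within_in.
  + by rewrite /= comp_ofE connect0.
  + by rewrite /= comp_ofE connect0.
  + by left.
  move=> [le hh]; right; split=> //; exists (winner r1 r2, [:: r1; r2]).
  rewrite mem_head /U /= !comp_ofE in hh *.
  by case: hh => [[/= -> ->]|[/= -> ->]]; rewrite ?orbT.
- move=> wG; rewrite inE => /orP[/eqP->|/e4//] r /=.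
  have := @zm_first (next_within A g0 (comp_of g0 r1)) (next_within A g0 (comp_of g0 r2))
       (merge_fuel n) r1 r2 g (ltn0Sn _).
  rewrite /winner !inE => hf /orP[]/eqP->; case: ifP hf => _ hf;
    try apply: connect0; apply: (connect_mono e2); apply: connect1;
    by rewrite /g1 /component_merge m1 m2.
Qed.

Definition Good (g : graph n) rs :=
  [/\ winc g, (forall v, exists r, r \in rs /\ connect (usym g) r v),
      (forall r, r \in rs -> forall v, connect (usym g) r v -> connect g r v) &
      uniq rs].

Lemma good_distinct g rs r r' : Good g rs -> r \in rs -> r' \in rs ->
  connect (usym g) r r' -> r = r'.
Proof.
move=> [w _ j3 _] hr hr' c; apply: injA; apply: le_anti.
rewrite (connect_winc w (j3 _ hr _ c)) /=.
by apply: (connect_winc w); apply: j3 hr' _ _; rewrite usymC.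
Qed.

Lemma flat_disj (ss : seq (seq 'I_n)) G G' r : uniq (flatten ss) ->
  G \in ss -> G' \in ss -> r \in G -> r \in G' -> G = G'.
Proof.
elim: ss => [|s ss IH] //=; rewrite cat_uniq => /and3P[_ hd u].
have H : forall H, H \in ss -> r \in H -> r \in s -> False.
  move=> H Hin rH rs; move/hasP: hd; apply; exists r => //.
  by apply/flattenP; exists H.
rewrite !inE => /orP[/eqP->|Gin] /orP[/eqP->|G'in] rG rG' //.
- by case: (H _ G'in rG' rG).
- by case: (H _ Gin rG rG').
- exact: IH.
Qed.

Lemma merge_good g0 rs : Good g0 rs ->
  Good (merge_step A g0 rs).1 (merge_step A g0 rs).2 /\
  size (merge_step A g0 rs).2 = uphalf (size rs).
Proof.
move=> gd; have [j1 j2 j3 j4] := gd.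
have hmin : forall r, r \in rs -> min_vertex A g0 r = r.
  by move=> r hr; apply: min_vertex_root => //; apply: j3.
have [e1 e2 e3 e4] := mp_spec g0 hmin.
rewrite /merge_step; set g' := (merge_pairs A g0 rs g0).1.
have [f1 f2 f3 f4] := grp_props rs.
rewrite e1 size_map f3; split=> //.
have inG : forall r, r \in rs -> exists wG, wG \in grp rs /\ r \in wG.2.
  move=> r; rewrite -{1}f1 => /flattenP [G /mapP [wG wGin ->] rG].
  by exists wG.
have UU : forall wG wG' x, wG \in grp rs -> wG' \in grp rs -> U g0 wG.2 x -> U g0 wG'.2 x ->
    wG.2 = wG'.2.
  move=> wG wG' x win win' /hasP [r1 r1in c1] /hasP [r2 r2in c2].
  have r1rs : r1 \in rs by rewrite -f1; apply/flattenP; exists wG.2 => //; apply: map_f.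
  have r2rs : r2 \in rs by rewrite -f1; apply/flattenP; exists wG'.2 => //; apply: map_f.
  have e : r1 = r2.
    apply: (good_distinct gd r1rs r2rs); apply: connect_trans c1 _; by rewrite usymC.
  apply: (@flat_disj (map snd (grp rs)) _ _ r1); rewrite ?f1 //; try by apply: map_f.
  by rewrite e.
split.
- move=> x y /e3 [/j1 //|[]//].
- move=> v; have [r [rin c]] := j2 v; have [wG [win rG]] := inG r rin.
  exists wG.1; split; first by apply: map_f.
  apply: connect_usym; apply: connect_trans (e4 _ win _ rG) _.
  exact: connect_mono e2 _ _ (j3 _ rin _ c).
- move=> r' /mapP [wG win ->] v c.
  have PU : forall x y, usym g' x y -> U g0 wG.2 x = U g0 wG.2 y.
    have PU1 : forall x y, g' x y -> U g0 wG.2 x = U g0 wG.2 y.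
      move=> x y /e3 [a|[_ [wG'' [win'' Ux Uy]]]].
        apply: eq_has => r /=; apply/idP/idP => h; apply: connect_trans h _;
        last rewrite usymC; by apply: connect1; rewrite /usym a ?orbT.
      apply/idP/idP => h.
        by rewrite (UU _ _ _ win win'' h Ux).
      by rewrite (UU _ _ _ win win'' h Uy).
    by move=> x y /orP[/PU1|/PU1 ->].
  have := connect_fun PU c; have Ur : U g0 wG.2 wG.1.
    by apply/hasP; exists wG.1; [apply: f2 | apply: connect0].
  rewrite Ur => /esym /hasP [r rin cr].
  have rrs : r \in rs by rewrite -f1; apply/flattenP; exists wG.2 => //; apply: map_f.
  apply: connect_trans (e4 _ win _ rin) _.
  exact: connect_mono e2 _ _ (j3 _ rrs _ cr).
- exact: subseq_uniq f4 j4.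
Qed.

End Gen.



Section DFS.
Variables (R : realFieldType) (n : nat) (A : 'I_n -> R).

Lemma mem_out_nbrs (g : graph n) u w : (w \in out_nbrs A g u) = g u w.
Proof. by rewrite /out_nbrs /sortA mem_sort mem_filter mem_enum andbT. Qed.

Lemma size_vis (s : seq 'I_n) : uniq s -> (size s <= n)%N.
Proof.
move=> us; have := uniq_leq_size us (s2 := enum 'I_n).
by rewrite size_enum_ord; apply=> x; rewrite mem_enum.
Qed.

Definition LoopInv (g : graph n) (u : 'I_n) (st st1 : dfs_state n) :=
  [/\ {subset u :: visited st <= visited st1}, uniq (visited st1),
      (forall x y, par st x = Some y -> par st1 x = Some y),
      (forall x, x \notin visited st1 -> par st1 x = None) &
      [/\ (forall x, x \in visited st1 -> x \notin visited st ->
         connect (forest_graph (par st1)) u x), (forall x y, par st1 x = Some y -> par st x = Some y \/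
         [/\ x != u, g y x, y \in visited st1 /\ y \notin visited st &
             x \in visited st1 /\ x \notin visited st]) &
      (forall x, x \in visited st1 -> x \notin visited st -> x != u ->
         forall w, g x w -> w \in visited st1)]].

Definition VisitPost (g : graph n) (u : 'I_n) (st st' : dfs_state n) :=
  [/\ {subset u :: visited st <= visited st'}, uniq (visited st'),
      (forall x y, par st x = Some y -> par st' x = Some y),
      (forall x, x \notin visited st' -> par st' x = None) &
      [/\ (forall x, x \in visited st' -> x \notin visited st ->
         connect (forest_graph (par st')) u x), (forall x y, par st' x = Some y -> par st x = Some y \/
         [/\ x != u, g y x, y \in visited st' /\ y \notin visited st &
             x \in visited st' /\ x \notin visited st]) &
      (forall x, x \in visited st' -> x \notin visited st ->
         forall w, g x w -> w \in visited st')]].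

Lemma visit_spec (g : graph n) fuel u st :
  u \notin visited st -> uniq (visited st) -> (n < fuel + size (visited st))%N ->
  (forall x, x \notin visited st -> x != u -> par st x = None) ->
  VisitPost g u st (visit A g fuel u st).
Proof.
elim: fuel u st => [|f IH] u st un us hf hpre.
  have := size_vis (s := u :: visited st); rewrite /= un us => /(_ isT).
  by rewrite add0n in hf; rewrite ltnNge (ltnW hf).
rewrite /=.
set step := fun st0 w => _.
have Hw : forall w, w \in out_nbrs A g u -> g u w by move=> w; rewrite mem_out_nbrs.
suff : forall ws st1, {subset ws <= out_nbrs A g u} -> LoopInv g u st st1 ->
   [/\ LoopInv g u st (foldl step st1 ws), {subset ws <= visited (foldl step st1 ws)} &
       {subset visited st1 <= visited (foldl step st1 ws)}].
  move/(_ (out_nbrs A g u) (DS (u :: visited st) (par st)) (fun x h => h)).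
  case.
    split=> //=; last split=> //=.
    - by rewrite un us.
    - by move=> x; rewrite inE negb_or => /andP[xu xv]; apply: hpre.
    - move=> x; rewrite inE => /orP[/eqP->|->] // _; exact: connect0.
    - by move=> x y ->; left.
    - by move=> x; rewrite inE => /orP[/eqP->|->] //; rewrite eqxx.
  move=> [l1 l2 l3 l4 [l5 l6 l7]] hsub _; split=> //; split=> //.
  move=> x xin xnin w gxw; case: (eqVneq x u) => [exu|xu]; last exact: l7 xin xnin xu _ gxw.
  by apply: hsub; rewrite mem_out_nbrs -exu.
elim=> [|w ws IHw] st1 hsub inv; first by split.
have wout : w \in out_nbrs A g u by apply: hsub; rewrite mem_head.
have hsub' : {subset ws <= out_nbrs A g u} by move=> z zin; apply: hsub; rewrite inE zin orbT.
rewrite [foldl _ _ _]/=.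
have [inv' win vinc] : [/\ LoopInv g u st (step st1 w), w \in visited (step st1 w) &
     {subset visited st1 <= visited (step st1 w)}].
  rewrite /step; case: ifP => wv; first by split.
  have [l1 lu l2 l3 [l4 l6 l7]] := inv.
  set st1' := DS (visited st1) (fun x => if x == w then Some u else par st1 x).
  have pre1 : w \notin visited st1' by rewrite /= wv.
  have pre3 : (n < f + size (visited st1'))%N.
    have := uniq_leq_size (s1 := u :: visited st) (s2 := visited st1); rewrite /= un us.
    move/(_ isT l1) => hsz; apply: leq_trans hf _; rewrite addSn -addnS.
    by rewrite leq_add2l.
  have pre4 : forall x, x \notin visited st1' -> x != w -> par st1' x = None.
    by move=> x xn xw; rewrite /= (negbTE xw); apply: l3.
  have [q1 q2 q3 q4 [q5 q6 q7]] := IH w st1' pre1 lu pre3 pre4.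
  set st2 := visit A g f w st1'.
  have v12 : forall x, x \in visited st1 -> x \in visited st2.
    by move=> x xin; apply: q1; rewrite inE xin orbT.
  have pw : par st1 w = None by apply: l3; rewrite wv.
  have p12 : forall x y, par st1 x = Some y -> par st2 x = Some y.
    move=> x y h; apply: q3; rewrite /=; case: eqP => [exw|//].
    by move: h; rewrite exw pw.
  have v0sub : forall z, z \in visited st -> z \in visited st1.
    by move=> z zin; apply: l1; rewrite inE zin orbT.
  have uin : u \in visited st1 by apply: l1; rewrite mem_head.
  have uw : w != u by apply/eqP => ewu; move: uin; rewrite -ewu wv.
  have w2 : w \in visited st2 by apply: q1; rewrite mem_head.
  have pw2 : par st2 w = Some u by apply: q3; rewrite /= eqxx.
  split=> //; split=> //; last split.
  - by move=> x /l1 /v12.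
  - by move=> x y /l2 /p12.
  - move=> x xin xn; case: (boolP (x \in visited st1)) => x1.
      by apply: (connect_mono _ (l4 x x1 xn)) => a b; rewrite /forest_graph => /eqP /p12 ->.
    apply: connect_trans (q5 x xin x1).
    by apply: connect1; rewrite /forest_graph pw2.
  - move=> x y /q6 [|[xw gyx [y2 y1] [x2 x1]]].
      rewrite /=; case: eqP => [->[<-]|_ /l6 [->|[? ? [? ?] [? ?]]]].
      + right; split=> //; first by rewrite Hw.
          by split=> //; apply: q1; rewrite inE uin orbT.
        by split=> //; apply: (contra (v0sub w)); rewrite wv.
      + by left.
      + by right; split=> //; split=> //; apply: v12.
    right; split=> //.
    + by apply/eqP => exu; move: x1; rewrite exu uin.
    + by split=> //; apply: (contra (v0sub y)) y1.
    + by split=> //; apply: (contra (v0sub x)) x1.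
  - move=> x xin xn xu z gxz; case: (boolP (x \in visited st1)) => x1.
      by apply: v12; apply: l7 x1 xn xu z gxz.
    exact: q7 xin x1 z gxz.
have [inv2 sub2 inc2] := IHw _ hsub' inv'.
split=> //.
  by move=> z; rewrite inE => /orP[/eqP->|]; [apply: inc2 | exact: sub2].
by move=> z /vinc /inc2.
Qed.


Definition TopInv (g : graph n) (l : seq 'I_n) (st : dfs_state n) :=
  [/\ uniq (visited st),
      (forall x, x \notin visited st -> par st x = None),
      (forall x y, par st x = Some y -> [/\ g y x, x \in visited st & y \in visited st]),
      (forall x, x \in visited st -> forall w, g x w -> w \in visited st) &
      exists lab : 'I_n -> 'I_n, (forall x y, par st x = Some y -> lab y = lab x) /\
        forall v, v \in visited st -> [/\ lab v \in l, lab v \in visited st,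
           par st (lab v) = None & connect (forest_graph (par st)) (lab v) v]].

Lemma top_gen (g : graph n) l s st : {subset s <= l} -> TopInv g l st ->
  let st' := foldl (fun st v => if v \in visited st then st else visit A g n.+1 v st) st s in
  [/\ TopInv g l st', {subset s <= visited st'} & {subset visited st <= visited st'}].
Proof.
elim: s st => [|v s IH] st hs inv; first by split.
have vl : v \in l by apply: hs; rewrite mem_head.
have hs' : {subset s <= l} by move=> z zs; apply: hs; rewrite inE zs orbT.
rewrite [foldl _ _ _]/=.
set step := fun st v => _.
suff [inv' vin inc] : [/\ TopInv g l (step st v), v \in visited (step st v) &
     {subset visited st <= visited (step st v)}].
  have [i1 i2 i3] := IH _ hs' inv'; split=> //.
    by move=> z; rewrite inE => /orP[/eqP->|]; [apply: i3 | exact: i2].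
  by move=> z /inc /i3.
rewrite /step; case: ifP => vv; first by split.
have [t1 t2 t3 t4 [lab [lb1 lb2]]] := inv.
have pre1 : v \notin visited st by rewrite vv.
have pre3 : (n < n.+1 + size (visited st))%N by rewrite addSn ltnS leq_addr.
have pre4 : forall x, x \notin visited st -> x != v -> par st x = None.
  by move=> x xn _; apply: t2.
have [q1 q2 q3 q4 [q5 q6 q7]] := @visit_spec g n.+1 v st pre1 t1 pre3 pre4.
set st' := visit A g n.+1 v st.
have inc : {subset visited st <= visited st'} by move=> x xin; apply: q1; rewrite inE xin orbT.
have vin : v \in visited st' by apply: q1; rewrite mem_head.
split=> //; split=> //.
- move=> x y /q6 [/t3 [a b c]|[_ gyx [y2 _] [x2 _]]]; last by split.
  by split=> //; apply: inc.
- move=> x xin w gxw; case: (boolP (x \in visited st)) => x0.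
    by apply: inc; apply: t4 x0 _ gxw.
  exact: q7 xin x0 _ gxw.
exists (fun x => if x \in visited st then lab x else v); split.
  move=> x y /q6 [/[dup] pxy /t3 [_ -> ->]|[_ _ [_ y0] [_ x0]]].
    exact: lb1 pxy.
  by rewrite (negbTE y0) (negbTE x0).
move=> w win; case: (boolP (w \in visited st)) => w0.
  have [a1 a2 a3 a4] := lb2 w w0; split=> //.
  - exact: inc.
  - case E: (par st' (lab w)) => [y|] //.
    by case/q6: E => [|[_ _ _ [_ h]]]; [rewrite a3 | rewrite a2 in h].
  - apply: (connect_mono _ a4) => a b; rewrite /forest_graph => /eqP /q3 ->.
    by [].
split=> //.
- case E: (par st' v) => [y|] //.
  by case/q6: E => [|[h _ _ _]]; [rewrite t2 | rewrite eqxx in h].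
- exact: q5 win w0.
Qed.

Lemma dfs_spec (g : graph n) l : (forall v, exists r, r \in l /\ connect g r v) ->
  let F := dfs_forest A g l in
  (forall x y, F x = Some y -> g y x) /\
  exists lab : 'I_n -> 'I_n, (forall x y, F x = Some y -> lab y = lab x) /\
    forall v, [/\ lab v \in l, F (lab v) = None & connect (forest_graph F) (lab v) v].
Proof.
move=> hreach; rewrite /dfs_forest.
have inv0 : TopInv g l (DS [::] (fun _ => None)).
  split=> //; exists id; split=> //.
have [[t1 t2 t3 t4 [lab [lb1 lb2]]] hsub _] := top_gen (fun x h => h) inv0.
set st := foldl _ _ _ in t1 t2 t3 t4 lb1 lb2 hsub *.
have allv : forall v, v \in visited st.
  move=> v; have [r [rl c]] := hreach v.
  by apply: (connect_pred _ c (hsub _ rl)) => x y gxy xin; apply: t4 xin _ gxy.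
split; first by move=> x y /t3 [].
exists lab; split=> // v; have [a1 a2 a3 a4] := lb2 v (allv v); split=> //.
Qed.

End DFS.



Lemma iter_uphalf m k : (0 < k)%N -> (k <= m.+1)%N -> iter m uphalf k = 1%N.
Proof.
elim: m k => [|m IH] k k0 km; first by apply/eqP; rewrite eqn_leq km.
rewrite iterSr; apply: IH; first by rewrite uphalf_gt0.
rewrite uphalfE -divn2; lia.
Qed.

Lemma connect_last (T : finType) (e : rel T) x y : connect e x y ->
  x = y \/ exists z, e z y.
Proof.
move=> /connectP [p]; elim: p x => [|z p IH] x /=; first by move=> _ ->; left.
case/andP=> exz hp hy; case: (IH z hp hy) => [ezy|]; last by right.
by right; exists x; rewrite -ezy.
Qed.

Section Main.
Variables (R : realFieldType) (n : nat) (A : 'I_n -> R).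
Hypothesis injA : injective A.

Lemma dfs_good (g : graph n) rs : Good A g rs ->
  Good A (forest_graph (dfs_forest A g rs)) rs.
Proof.
move=> gd; have [j1 j2 j3 j4] := gd.
have hreach : forall v, exists r, r \in rs /\ connect g r v.
  by move=> v; have [r [rin c]] := j2 v; exists r; split=> //; apply: j3.
have [fa [lab [lb1 lb2]]] := dfs_spec A hreach.
set F := dfs_forest A g rs in fa lb1 lb2 *.
have fg : forall u w, forest_graph F u w -> g u w.
  by move=> u w /eqP /fa.
have labfix : forall r, r \in rs -> lab r = r.
  move=> r rin; have [a1 a2 a3] := lb2 r.
  exact: (good_distinct injA gd a1 rin (connect_usym (connect_mono fg a3))).
split=> //.
- by move=> u w /fg /j1.
- move=> v; have [a1 a2 a3] := lb2 v; exists (lab v); split=> //.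
  exact: connect_usym.
- move=> r rin v c.
  have : lab r = lab v.
    apply: (connect_fun _ c) => x y /orP [] /eqP /lb1 //.
  rewrite labfix // => ->; by have [] := lb2 v.
Qed.

Lemma init_good l : uniq l -> (forall v, v \in l) ->
  let F := dfs_forest A (reach_one_graph A) l in
  Good A (forest_graph F) (roots_in l F).
Proof.
move=> ul lall F.
have hreach : forall v, exists r, r \in l /\ connect (reach_one_graph A) r v.
  by move=> v; exists v; split=> //; apply: connect0.
have [fa [lab [lb1 lb2]]] := dfs_spec A hreach.
rewrite -/F in fa lb1 lb2.
have inroots : forall r, (r \in roots_in l F) = (F r == None) && (r \in l).
  by move=> r; rewrite mem_filter.
have labfix : forall r, F r = None -> lab r = r.
  move=> r Fr; have [a1 a2 a3] := lb2 r.
  case: (connect_last a3) => [//|[z]]; by rewrite /forest_graph Fr.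
split.
- move=> u w /eqP /fa; rewrite /reach_one_graph => /and3P [_ _ h]; exact: ltW.
- move=> v; have [a1 a2 a3] := lb2 v; exists (lab v); split.
    by rewrite inroots a2 eqxx.
  exact: connect_usym.
- move=> r; rewrite inroots => /andP [/eqP Fr _] v c.
  have : lab r = lab v.
    apply: (connect_fun _ c) => x y /orP [] /eqP /lb1 //.
  rewrite labfix // => ->; by have [] := lb2 v.
- exact: filter_uniq.
Qed.

Lemma ms_good F rs : Good A (forest_graph F) rs -> Good A (merge_subtrees A F) rs.
Proof.
move=> [j1 j2 j3 j4]; have [H1 H2] := ms_spec A F.
have back : forall x y, connect (usym (merge_subtrees A F)) x y ->
    connect (usym (forest_graph F)) x y.
  apply: connect_sub => x y /orP [] /H2 [h|[_ c]] //;
    try (by apply: connect1; rewrite /usym h ?orbT); by rewrite usymC.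
split=> //.
- by move=> x y /H2 [/j1|[]].
- move=> v; have [r [rin c]] := j2 v; exists r; split=> //.
  exact: connect_mono (usym_mono H1) _ _ c.
- move=> r rin v /back /(j3 _ rin) c; exact: connect_mono H1 _ _ c.
Qed.

Lemma good_one (g : graph n) rs : Good A g rs -> size rs = 1%N ->
  forall x y, connect (usym g) x y.
Proof.
move=> gd sz; case: rs gd sz => [|r [|? ?]] // [_ j2 _ _] _ x y.
have [r1 [/[!inE] /eqP -> c1]] := j2 x.
have [r2 [/[!inE] /eqP -> c2]] := j2 y.
by apply: connect_trans c2; rewrite usymC.
Qed.

Lemma good_size (g : graph n) rs : (0 < n)%N -> Good A g rs -> (0 < size rs)%N.
Proof.
move=> n0 [_ j2 _ _]; have [r [rin _]] := j2 (Ordinal n0).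
by case: rs rin j2.
Qed.

Lemma round_good F rs i : Good A (merge_subtrees A F) rs -> (0 < i)%N ->
  Good A (forest_graph (round A F rs i).1) (round A F rs i).2 /\
  size (round A F rs i).2 = iter i uphalf (size rs).
Proof.
move=> gd; case: i => // i _; rewrite /round /=.
elim: i => [|i [IHg IHs]].
  have [g1 s1] := merge_good injA gd.
  by split; [apply: dfs_good | rewrite /= s1].
rewrite iterS [iter i.+1 _ _]iterS -IHs.
have [g1 s1] := merge_good injA IHg.
by split; [apply: dfs_good | rewrite /= s1].
Qed.

End Main.

Unset Implicit Arguments.

Theorem corollary5 (R : realFieldType) (n : nat) (A : 'I_n -> R)
    (l : seq 'I_n) :
  (0 < n)%N -> injective A -> perm_eq l (enum 'I_n) ->
  let F := dfs_forest A (reach_one_graph A) l in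
  one_component F \/
  exists i : nat, (0 < i)%N /\ one_component (round A F (roots_in l F) i).1.
Proof.
move=> n0 injA lperm F.
have ul : uniq l by rewrite (perm_uniq lperm) enum_uniq.
have lall : forall v, v \in l by move=> v; rewrite (perm_mem lperm) mem_enum.
have g0 := init_good A ul lall.
rewrite -/F in g0.
have k0 := good_size n0 g0.
case: (eqVneq (size (roots_in l F)) 1%N) => [k1|k1].
  by left; apply: good_one g0 k1.
right; exists (size (roots_in l F)); split=> //.
have [gd sz] := round_good injA (ms_good g0) k0.
apply: good_one gd _; rewrite sz; exact: iter_uphalf.
Qed.
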